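(* Let $\alpha>0$, $\mathfrak r\ge0$, $\eta:=\mathfrak r/\alpha$, and $L(\rho)=L_0+L_1\rho$ with $L_0\ge0$, $L_1>0$. For $\rho>0$ let $p(\rho):=\eta+\frac12\alpha^{-2}L(\rho)\rho^2-\rho$, $q(\rho):=\alpha^{-1}L(\rho)\rho$, call $\rho$ admissible ($\mathsf{Adm}(\rho)$) if $p(\rho)\le0$ and $q(\rho)<1$, and let $\mathcal{AD}:=\{\rho>0:\mathsf{Adm}(\rho)\}$. Assume $\mathcal{AD}\neq\emptyset$ and let $\rho_+:=\sup\mathcal{AD}$. Consider the bisection procedure: starting from $0<\rho_{\rm low}^{(0)}<\rho_{\rm up}^{(0)}$ with $\mathsf{Adm}(\rho_{\rm low}^{(0)})$ true and $\mathsf{Adm}(\rho_{\rm up}^{(0)})$ false, repeat $k_{\max}$ times: set $\rho_{\rm mid}:=(\rho_{\rm low}+\rho_{\rm up})/2$; if $\mathsf{Adm}(\rho_{\rm mid})$ then $\rho_{\rm low}\gets\rho_{\rm mid}$, else $\rho_{\rm up}\gets\rho_{\rm mid}$; finally return $\rho_{\rm low}$. Then every iteration preserves $\mathsf{Adm}(\rho_{\rm low})$ true and $\mathsf{Adm}(\rho_{\rm up})$ false, and the returned $\rho_{\rm low}$ is admissible and satisfies $$\rho_{\rm low}\le\rho_+\le\rho_{\rm up},\qquad \rho_{\rm up}-\rho_{\rm low}\le2^{-k_{\max}}\bigl(\rho_{\rm up}^{(0)}-\rho_{\rm low}^{(0)}\bigr).$$ Furthermore, consider the preceding shrinking phase: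 test $\rho=2\eta$; if inadmissible, set $\rho_{\rm up}:=2\eta$ and for $j=1,\dots,j_{\max}$ set $\rho_{\rm low}:=\rho_{\rm up}/2$, stop if $\mathsf{Adm}(\rho_{\rm low})$, otherwise $\rho_{\rm up}:=\rho_{\rm low}$; return fail if the last tested $\rho_{\rm low}$ is inadmissible. If this phase returns fail, then $\mathsf{Adm}(2\eta/2^j)$ is false for every $j=0,1,\dots,j_{\max}$. *)

(* Defs.v *)
From HB Require Import structures.
From mathcomp Require Import all_boot all_order all_algebra.
From mathcomp Require Import boolp classical_sets reals.
Set Implicit Arguments. Unset Strict Implicit. Unset Printing Implicit Defensive.
Import Order.TTheory GRing.Theory Num.Theory.
Local Open Scope ring_scope.
Local Open Scope classical_set_scope.

Section Defs.
Variables (R : realType) (alpha rr L0 L1 : R).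

Definition eta_ : R := rr / alpha.
Definition Lfun (rho : R) : R := L0 + L1 * rho.
Definition pfun (rho : R) : R :=
  eta_ + 2^-1 * alpha^-2 * Lfun rho * rho ^+ 2 - rho.
Definition qfun (rho : R) : R := alpha^-1 * Lfun rho * rho.

Definition Adm (rho : R) : bool := (pfun rho <= 0) && (qfun rho < 1).

Definition AD : set R := [set rho | 0 < rho /\ Adm rho].

Definition rho_plus : R := sup AD.

Definition bisect_step (st : R * R) : R * R :=
  let mid := (st.1 + st.2) / 2 in
  if Adm mid then (mid, st.2) else (st.1, mid).

Definition bisect (low0 up0 : R) (k : nat) : R * R :=
  iter k bisect_step (low0, up0).

Fixpoint shrink_loop (n : nat) (up : R) : option R :=
  match n with
  | 0%N => None
  | n'.+1 => let low := up / 2 in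
             if Adm low then Some low else shrink_loop n' low
  end.

Definition shrink_phase (jmax : nat) : option R :=
  if Adm (2 * eta_) then Some (2 * eta_) else shrink_loop jmax (2 * eta_).

End Defs.

(* Main.v *)
Require Import Defs.
From HB Require Import structures.
From mathcomp Require Import all_boot all_order all_algebra.
From mathcomp Require Import boolp classical_sets reals.
From mathcomp Require Import ring lra.
Import Order.TTheory GRing.Theory Num.Theory.
Local Open Scope ring_scope.
Local Open Scope classical_set_scope.

Section Aux.
Variables (R : realType) (alpha rr L0 L1 : R).
Hypotheses (halpha : 0 < alpha) (hL0 : 0 <= L0) (hL1 : 0 < L1).

Lemma adm_convex a b c : 0 < a -> a < b -> b < c ->
  Adm alpha rr L0 L1 a -> Adm alpha rr L0 L1 c -> Adm alpha rr L0 L1 b.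
Proof.
move=> a0 ab bc /andP[pa qa] /andP[pc qc]; apply/andP; split.
- move: pa pc; rewrite /pfun /Lfun.
  set k := 2^-1 * alpha^-2; set e := eta_ alpha rr.
  have k0 : 0 < k by rewrite /k mulr_gt0 // ?invr_gt0 // exprn_gt0.
  move=> pa pc.
  have id : (c - b) * (e + k * (L0 + L1 * a) * a ^+ 2 - a)
          + (b - a) * (e + k * (L0 + L1 * c) * c ^+ 2 - c)
          - (c - a) * (e + k * (L0 + L1 * b) * b ^+ 2 - b)
          = k * ((c - a) * (c - b) * (b - a)) * (L0 + L1 * (a + b + c)) by ring.
  have pos : 0 <= k * ((c - a) * (c - b) * (b - a)) * (L0 + L1 * (a + b + c)).
    apply: mulr_ge0; first apply: mulr_ge0; first by apply: ltW.
      by apply: mulr_ge0; [apply: mulr_ge0|]; rewrite subr_ge0 ltW // (lt_trans ab).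
    by apply: addr_ge0 => //; apply: mulr_ge0; [apply: ltW|lra].
  have h1 : 0 <= c - b by lra.
  have h2 : 0 <= b - a by lra.
  have h3 : 0 < c - a by lra.
  set pA := e + k * (L0 + L1 * a) * a ^+ 2 - a in pa id.
  set pC := e + k * (L0 + L1 * c) * c ^+ 2 - c in pc id.
  set pB := e + k * (L0 + L1 * b) * b ^+ 2 - b in id *.
  have t1 : (c - b) * pA <= 0 by rewrite mulr_ge0_le0.
  have t2 : (b - a) * pC <= 0 by rewrite mulr_ge0_le0.
  have : (c - a) * pB <= 0.
    rewrite -id in pos; move: pos t1 t2.
    move: ((c - b) * pA) ((b - a) * pC) ((c - a) * pB) => x y z; lra.
  by rewrite pmulr_rle0.
- apply: le_lt_trans qc; rewrite /qfun /Lfun -!mulrA ler_pM2l ?invr_gt0 //.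
  have bb : b * b <= c * c by nra.
  have t1 : L0 * b <= L0 * c by rewrite ler_wpM2l // ltW.
  have t2 : L1 * (b * b) <= L1 * (c * c) by rewrite ler_wpM2l // ltW.
  rewrite !mulrDl -!mulrA; lra.
Qed.

Lemma bisect_inv low0 up0 k : 0 < low0 -> low0 < up0 ->
  Adm alpha rr L0 L1 low0 -> ~~ Adm alpha rr L0 L1 up0 ->
  let st := bisect alpha rr L0 L1 low0 up0 k in
  [/\ low0 <= st.1, st.1 < st.2, st.2 - st.1 = (2 ^+ k)^-1 * (up0 - low0),
      Adm alpha rr L0 L1 st.1 & ~~ Adm alpha rr L0 L1 st.2].
Proof.
move=> l0 lu A0 nA0; elim: k => [|k IH].
  by rewrite /= expr0 invr1 mul1r; split.
have -> : bisect alpha rr L0 L1 low0 up0 k.+1 =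
  bisect_step alpha rr L0 L1 (bisect alpha rr L0 L1 low0 up0 k) by [].
move: IH; case: (bisect _ _ _ _ low0 up0 k) => l u /= [h1 h2 h3 h4 h5].
have e2 : (2 ^+ k.+1 : R)^-1 = 2^-1 * (2 ^+ k)^-1 by rewrite exprS invfM.
rewrite /bisect_step /=; case: ifP => hm /=; split => //; try lra;
  try by rewrite hm.
all: by rewrite exprS invfM -mulrA -h3; field.
Qed.

Lemma shrink_none n u : ~~ Adm alpha rr L0 L1 u ->
  shrink_loop alpha rr L0 L1 n u = None ->
  forall j, (j <= n)%N -> ~~ Adm alpha rr L0 L1 (u / 2 ^+ j).
Proof.
elim: n u => [|n IH] u nu /=.
  by move=> _ j; rewrite leqn0 => /eqP ->; rewrite expr0 divr1.
case: ifP => // hA hn [|j] hj; first by rewrite expr0 divr1.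
have -> : u / 2 ^+ j.+1 = (u / 2) / 2 ^+ j.
  by rewrite exprS invfM mulrA.
by apply: IH => //; rewrite hA.
Qed.

End Aux.

Theorem propositionA2 (R : realType) (alpha rr L0 L1 : R)
  (halpha : 0 < alpha) (hrr : 0 <= rr) (hL0 : 0 <= L0) (hL1 : 0 < L1)
  (hAD : AD alpha rr L0 L1 !=set0)
  (low0 up0 : R) (kmax jmax : nat)
  (hlow0 : 0 < low0) (hlu : low0 < up0)
  (hAlow0 : Adm alpha rr L0 L1 low0) (hAup0 : ~~ Adm alpha rr L0 L1 up0) :
  (forall k : nat, (k <= kmax)%N ->
     Adm alpha rr L0 L1 (bisect alpha rr L0 L1 low0 up0 k).1 /\
     ~~ Adm alpha rr L0 L1 (bisect alpha rr L0 L1 low0 up0 k).2) /\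
  (let low := (bisect alpha rr L0 L1 low0 up0 kmax).1 in
   let up := (bisect alpha rr L0 L1 low0 up0 kmax).2 in
   Adm alpha rr L0 L1 low /\
   low <= rho_plus alpha rr L0 L1 <= up /\
   up - low <= (2 ^+ kmax)^-1 * (up0 - low0)) /\
  (shrink_phase alpha rr L0 L1 jmax = None ->
   forall j : nat, (j <= jmax)%N ->
     ~~ Adm alpha rr L0 L1 (2 * eta_ alpha rr / 2 ^+ j)).
Proof.
split.
  move=> k _; have [] := @bisect_inv R alpha rr L0 L1 low0 up0 k hlow0 hlu hAlow0 hAup0.
  by move=> *; split.
split.
  move=> low up.
  have [h1 h2 h3 h4 h5] := @bisect_inv R alpha rr L0 L1 low0 up0 kmax hlow0 hlu hAlow0 hAup0.
  rewrite -/low -/up in h1 h2 h3 h4 h5.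
  have ub : ubound (AD alpha rr L0 L1) up.
    move=> x [x0 Ax]; rewrite leNgt; apply/negP => ux.
    by move: h5; rewrite (@adm_convex R alpha rr L0 L1 halpha hL0 hL1 low up x _ h2 ux h4 Ax) //; lra.
  have hs : has_sup (AD alpha rr L0 L1) by split => //; exists up.
  split => //; split; last by rewrite h3.
  apply/andP; split; last exact: ge_sup.
  apply: sup_upper_bound => //; split => //; lra.
rewrite /shrink_phase; case: ifP => // hA hn j hj.
exact: (@shrink_none R alpha rr L0 L1 jmax _ (negbT hA) hn j hj).
Qed.
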